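(* Let $d\ge1$, let $\ell_1>\ell_2>\dots>\ell_d\ge1$ and $r_1,\dots,r_d\ge1$ be integers, and let $n_1,\dots,n_d$ be positive integers with $n_i\ge 2r_i\ell_i$. For each $i$ fix a gap sequence $\vec g(i)=(g_1(i),\dots,g_{r_i}(i))$ of integers with $g_j(i)\ge2\ell_i$ and $\sum_j g_j(i)=n_i$. Let $P_d(\vec n,\vec\ell,\vec r)$ be the number of tuples $(p_1,\dots,p_d)$ with $p_i\in\mathbb Z/n_i\mathbb Z$ that are valid, meaning: there are no indices $i<j$, $a\in\{1,\dots,r_i\}$, $b\in\{1,\dots,r_j\}$ such that $e_a(i)\in W_i(\ell_j)$ and $e_b(j)\in W_j(\ell_j)$. Then this number does not depend on the choice of gap sequences, and it satisfies $P_0=1$, $P_1(n_1,\ell_1,r_1)=n_1$, and for $d\ge1$ $$P_d(\vec n,\vec\ell,\vec r)=\prod_{i=1}^d n_i-4\sum_{1\le i<j\le d} r_ir_j\ell_j^2\, P_{i-1}(\vec n(i),\vec\ell(i),\vec r(i))\prod_{i<k<j}(n_k-2r_k\ell_k)\prod_{k>j}n_k,$$ where $\vec n(i)=(n_1-2r_1\ell_i,\dots,n_{i-1}-2r_{i-1}\ell_i)$, $\vec\ell(i)=(\ell_1-\ell_i,\dots,\ell_{i-1}-\ell_i)$, $\vec r(i)=(r_1,\dots,r_{i-1})$. In particular, if $n_i=n-\ell_i-2\sum_{j\ne i}r_j\min(\ell_i,\ell_j)$ for each $i$, then $P_d$ is a monic polynomial in $n$ of degree $d$ (with $P_1=n-\ell_1$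 when $d=1$).
   Context: Notation: for track $i$ (a cycle $\mathbb Z/n_i\mathbb Z$ whose elements are represented by $1,\dots,n_i$, with $n_i$ called the boundary), given position $p_i$ and gap sequence $\vec g(i)$, the $a$-th run on track $i$ occupies the $\ell_i$ consecutive positions starting at $p_i+g_1(i)+\dots+g_{a-1}(i)$, and its end is $e_a(i)=p_i+g_1(i)+\dots+g_{a-1}(i)+\ell_i-1 \pmod{n_i}$. For $m\le n_i/2$, the window $W_i(m)\subseteq\mathbb Z/n_i\mathbb Z$ is the set of $2m$ residues $\{n_i-m+1,\dots,n_i,1,2,\dots,m\}$ (the $2m$ positions nearest the boundary). Empty products equal $1$. *)

(* Defs.v *)
(* Tracks are indexed 0..d-1 (paper's track i is index i-1 here);
   runs on a track are indexed 0..r_i-1 (paper's run a is index a-1). *)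
From HB Require Import structures.
From mathcomp Require Import all_boot all_order all_algebra.
Set Implicit Arguments.
Unset Strict Implicit.
Unset Printing Implicit Defensive.
Import Order.TTheory GRing.Theory Num.Theory.

(* Residue x (mod nn) lies in the window W(m) = {nn-m+1,...,nn,1,...,m} of Z/nnZ,
   i.e. its representative in 0..nn-1 is in {0..m} or in {nn-m+1..nn-1}. *)
Definition in_window (nn m x : nat) : bool :=
  (x %% nn <= m) || (nn - m < x %% nn).

Definition run_end (l : nat -> nat) (g : nat -> nat -> nat) (i : nat) (pi a : nat) : nat :=
  pi + (\sum_(c < a) g i c) + (l i - 1).

Definition valid (d : nat) (n l r : nat -> nat) (g : nat -> nat -> nat)
  (p : {dffun forall i : 'I_d, 'I_(n i)}) : bool :=
  [forall i : 'I_d, forall j : 'I_d, (i < j)%N ==>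
     ~~ ([exists a : 'I_(r i), in_window (n i) (l j) (run_end l g i (p i) a)] &&
         [exists b : 'I_(r j), in_window (n j) (l j) (run_end l g j (p j) b)])].

Definition count_valid (d : nat) (n l r : nat -> nat) (g : nat -> nat -> nat) : nat :=
  #|[pred p : {dffun forall i : 'I_d, 'I_(n i)} | valid l r g p]|.

Definition params_ok (d : nat) (n l r : nat -> nat) : Prop :=
  (forall i, (i.+1 < d)%N -> (l i.+1 < l i)%N) /\
  (forall i, (i < d)%N -> [/\ (1 <= l i)%N, (1 <= r i)%N & (2 * r i * l i <= n i)%N]).

Definition gaps_ok (d : nat) (n l r : nat -> nat) (g : nat -> nat -> nat) : Prop :=
  forall i, (i < d)%N ->
    (forall c, (c < r i)%N -> (2 * l i <= g i c)%N) /\ (\sum_(c < r i) g i c)%N = n i.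

(* Reduced parameters for (0-based) index i: n(i)_k = n_k - 2 r_k l_i, l(i)_k = l_k - l_i
   (only entries k < i are used, the reduced system having i tracks). *)
Definition red_n (n l r : nat -> nat) (i : nat) : nat -> nat := fun k => n k - 2 * r k * l i.
Definition red_l (l : nat -> nat) (i : nat) : nat -> nat := fun k => l k - l i.

(* Main.v *)
Require Import Defs.
From HB Require Import structures.
From mathcomp Require Import all_boot all_order all_algebra.
From mathcomp Require Import zify ring.
Import Order.TTheory GRing.Theory Num.Theory.
Set Implicit Arguments.
Unset Strict Implicit.
Unset Printing Implicit Defensive.

Lemma in_window_mono nn m m' x : m <= m' -> in_window nn m x -> in_window nn m' x.
Proof. rewrite /in_window => h /orP [h1|h1]; apply/orP; [left|right]; lia. Qed.

Lemma modn_big z nn : nn <= z -> z < nn + nn -> z %% nn = z - nn.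
Proof.
move=> h1 h2; have -> : z = (z - nn) + nn by lia.
by rewrite modnDr modn_small; lia.
Qed.

Lemma in_windowE nn m y : 0 < m -> m + m <= nn ->
  in_window nn m y = ((y + (m - 1)) %% nn < m + m).
Proof.
move=> m0 mn; rewrite /in_window -modnDml.
have un : y %% nn < nn by rewrite ltn_pmod //; lia.
move: (y %% nn) un => u un.
case: (ltnP (u + (m - 1)) nn) => h.
  rewrite modn_small //. apply/idP/idP => H; [lia|].
  apply/orP; lia.
rewrite modn_big //; last by lia.
apply/idP/idP => H; [lia|]. apply/orP; lia.
Qed.

Lemma sum_shift1 nn (F : nat -> nat) : 0 < nn ->
  \sum_(0 <= x < nn) F ((x + 1) %% nn) = \sum_(0 <= x < nn) F x.
Proof.
case: nn => // k _.
rewrite big_nat_recr //= big_nat_recl //= addn1 modnn.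
rewrite addnC; congr (_ + _); apply: eq_big_nat => x /andP [_ xk].
by rewrite modn_small ?addn1 //; lia.
Qed.

Lemma sum_shift nn (F : nat -> nat) c : 0 < nn ->
  \sum_(0 <= x < nn) F ((x + c) %% nn) = \sum_(0 <= x < nn) F x.
Proof.
move=> nn0; elim: c => [|c IH].
  by apply: eq_big_nat => x /andP [_ xn]; rewrite addn0 modn_small.
rewrite -IH -(sum_shift1 (fun y => F ((y + c) %% nn))) //.
apply: eq_bigr => x _; congr F.
by rewrite modnDml -addnA (addnC 1) addn1.
Qed.

Lemma sum_lt N K : \sum_(0 <= x < N) (x < K) = minn N K.
Proof.
elim: N => [|N IH]; first by rewrite big_nil min0n.
rewrite big_nat_recr //= IH; case: (ltnP N K) => h; lia.
Qed.

Lemma exists_sum R (P : 'I_R -> bool) : (forall a b, P a -> P b -> a = b) ->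
  ([exists a, P a] : nat) = \sum_(a < R) (P a : nat).
Proof.
move=> U; case: existsP => [[a Pa] | nP].
  rewrite (bigD1 a) //= Pa big1 // => b ba.
  by case Pb: (P b) => //; move: ba; rewrite (U _ _ Pb Pa) eqxx.
by rewrite big1 // => a _; case Pa: (P a) => //; case: nP; exists a.
Qed.

Lemma win_count nn L R (G : nat -> nat) m :
  (forall c, c < R -> 2 * L <= G c) -> \sum_(c < R) G c = nn -> m <= L ->
  \sum_(x < nn) ((0 < m) && [exists a : 'I_R, in_window nn m (x + \sum_(c < a) G c + (L - 1))])
  = 2 * R * m.
Proof.
move=> HG Hs mL.
case: (posnP m) => [->|m0].
  by rewrite muln0 big1.
have sR : forall a, a <= R -> \sum_(c < a) G c + \sum_(a <= c < R) G c = nn.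
  move=> a aR; rewrite -Hs -!(big_mkord xpredT) (@big_cat_nat _ _ _ a 0 R _ _ (leq0n a) aR) //.
have sge : forall a b, a < b -> b <= R -> 2 * L <= \sum_(a <= c < b) G c.
  move=> a b ab bR; rewrite big_ltn //; have := HG a; lia.
have sab : forall a b, a <= b -> \sum_(c < b) G c = \sum_(c < a) G c + \sum_(a <= c < b) G c.
  by move=> a b ab; rewrite -!(big_mkord xpredT) (@big_cat_nat _ _ _ a 0 b _ _ (leq0n a) ab).
have nnge : 0 < R -> m + m <= nn.
  move=> R0; have := sR 0 (leq0n R); rewrite big_ord0 add0n => <-.
  have := sge 0 R R0 (leqnn R); lia.
under eq_bigr => x _ do rewrite andTb.
under eq_bigr => x _.
  rewrite exists_sum; last first.
    move=> a b.
    wlog ab : a b / a <= b.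
      move=> W Ha Hb; case: (leqP a b) => h; first exact: W.
      by apply/esym/W => //; apply: ltnW.
    move=> Ha Hb; apply/val_inj/eqP; rewrite eqn_leq ab /=; apply: contraTT isT => ba.
    rewrite -ltnNge in ba.
    have bR := ltn_ord b.
    have R0 : 0 < R by lia.
    have nn2 := nnge R0; move: Ha Hb; rewrite !in_windowE //.
    rewrite (sab a b ab) => Ha.
    set D := \sum_(a <= c < b) G c.
    have hD := sge a b ba (ltnW bR).
    have hsum := sR b (ltnW bR).
    have hb := sge b R bR (leqnn R).
    rewrite (sab a b ab) -/D in hsum.
    have -> : x + (\sum_(c < a) G c + D) + (L - 1) + (m - 1) =
              (x + \sum_(c < a) G c + (L - 1) + (m - 1)) + D by lia.
    rewrite -modnDml.
    move: Ha; set u := (_ + _ + _ + _) %% nn => Ha.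
    have xn := ltn_ord x.
    rewrite modn_small; lia.
  over.
rewrite exchange_big /=.
rewrite (eq_bigr (fun _ => m + m)); first by rewrite sum_nat_const card_ord; lia.
move=> a _.
have R0 : 0 < R by have := ltn_ord a; lia.
have nn2 := nnge R0.
under eq_bigr => x _ do rewrite in_windowE // -!addnA.
rewrite -(big_mkord xpredT (fun x => ((x + (\sum_(c<a) G c + ((L-1)+(m-1)))) %% nn < m + m) : nat)).
rewrite (sum_shift (fun y => y < m + m)); last by lia.
by rewrite sum_lt; lia.
Qed.

Lemma card_dffun d (n : nat -> nat) :
  #|{dffun forall i : 'I_d, 'I_(n i)}| = \prod_(i < d) n i.
Proof.
rewrite card_dep_ffun foldrE big_map big_enum /=.
by apply: eq_bigr => i _; rewrite card_ord.
Qed.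

Lemma cardP_sum (T : finType) (P : pred T) : #|[pred x | P x]| = \sum_x (P x : nat).
Proof.
rewrite -sum1_card big_mkcond; apply: eq_bigr => x _; rewrite inE; by case: (P x).
Qed.

Section Peel.
Variables (n l r : nat -> nat) (g : nat -> nat -> nat).

Definition restr d (p : {dffun forall i : 'I_d.+1, 'I_(n i)}) : {dffun forall i : 'I_d, 'I_(n i)} :=
  finfun (fun j : 'I_d => p (widen_ord (leqnSn d) j) : 'I_(n j)).

Definition phi d (p : {dffun forall i : 'I_d.+1, 'I_(n i)}) :
  {dffun forall i : 'I_d, 'I_(n i)} * 'I_(n d) := (restr p, p ord_max).

Lemma phi_inj d : injective (@phi d).
Proof.
move=> p1 p2 [] Hr Hm; apply/ffunP => i.
case: (ltnP i d) => h.
  have -> : i = widen_ord (leqnSn d) (Ordinal h) by apply/val_inj.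
  apply/val_inj.
  have := congr1 (fun q : {dffun forall i : 'I_d, 'I_(n i)} => nat_of_ord (q (Ordinal h))) Hr; by rewrite !ffunE.
have -> : i = ord_max by apply/val_inj => /=; have := ltn_ord i; lia.
exact: Hm.
Qed.

Lemma phi_bij d : bijective (@phi d).
Proof.
apply: (@inj_card_bij _ _ (@phi d) (@phi_inj d)).
by rewrite card_prod !card_dffun card_ord big_ord_recr.
Qed.

Definition pv d (p : {dffun forall i : 'I_d, 'I_(n i)}) (k : nat) : nat :=
  if (insub k : option 'I_d) is Some i then nat_of_ord (p i) else 0.

Lemma pvE d (p : {dffun forall i : 'I_d, 'I_(n i)}) (i : 'I_d) : pv p i = p i.
Proof.
rewrite /pv; case: insubP => [j _ /val_inj -> //|]; by rewrite ltn_ord.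
Qed.

Lemma pv_restr d (p : {dffun forall i : 'I_d.+1, 'I_(n i)}) k : k < d -> pv (restr p) k = pv p k.
Proof.
move=> kd; have -> : k = Ordinal kd by [].
rewrite pvE ffunE.
by rewrite -[LHS](pvE p (widen_ord (leqnSn d) (Ordinal kd))).
Qed.

Lemma pv_last d (p : {dffun forall i : 'I_d.+1, 'I_(n i)}) : pv p d = p ord_max.
Proof. exact: (pvE p ord_max). Qed.


Definition Wn k m x := (0 < m) && [exists a : 'I_(r k), in_window (n k) m (run_end l g k x a)].

Definition validG d (v : nat -> nat) :=
  [forall i : 'I_d, forall j : 'I_d, (i < j) ==> ~~ (Wn i (l j) (v i) && Wn j (l j) (v j))].
Definition avoidG d m (v : nat -> nat) := [forall k : 'I_d, ~~ Wn k m (v k)].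

Lemma validGP d v : reflect (forall i j, i < j -> j < d -> ~~ (Wn i (l j) (v i) && Wn j (l j) (v j)))
  (validG d v).
Proof.
apply: (iffP forallP) => H.
  move=> i j ij jd; have id : i < d by apply: ltn_trans jd.
  by move: (H (Ordinal id)) => /forallP/(_ (Ordinal jd)) /implyP; apply.
move=> i; apply/forallP => j; apply/implyP => ij; exact: H.
Qed.

Lemma avoidGP d m v : reflect (forall k, k < d -> ~~ Wn k m (v k)) (avoidG d m v).
Proof.
apply: (iffP forallP) => H; first by move=> k kd; exact: (H (Ordinal kd)).
move=> k; exact: H.
Qed.

Lemma Wn_mono k m m' x : m <= m' -> Wn k m x -> Wn k m' x.
Proof.
move=> mm /andP [m0 /existsP [a Ha]]; apply/andP; split; first by apply: leq_trans mm.
by apply/existsP; exists a; apply: in_window_mono Ha.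
Qed.

Lemma validG_ext d v w : (forall k, k < d -> v k = w k) -> validG d v = validG d w.
Proof.
move=> H; apply/validGP/validGP => H' i j ij jd.
  by rewrite -!H //; [exact: H' | apply: ltn_trans jd].
by rewrite !H //; [exact: H' | apply: ltn_trans jd].
Qed.

Lemma avoidG_ext d m v w : (forall k, k < d -> v k = w k) -> avoidG d m v = avoidG d m w.
Proof.
move=> H; apply/avoidGP/avoidGP => H' k kd; first by rewrite -H //; exact: H'.
by rewrite H //; exact: H'.
Qed.

Lemma peel_pred d m v : m <= l d ->
  validG d.+1 v && avoidG d.+1 m v =
  [&& validG d v, avoidG d m v, ~~ Wn d (l d) (v d) || avoidG d (l d) v & ~~ Wn d m (v d)].
Proof.
move=> ml; apply/idP/idP.
  case/andP => /validGP V /avoidGP A; apply/and4P; split.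
  - by apply/validGP => i j ij jd; apply: V => //; apply: ltnW.
  - by apply/avoidGP => k kd; apply: A; apply: ltnW.
  - case W: (Wn d (l d) (v d)) => //=; apply/avoidGP => k kd.
    by have := V k d kd (ltnSn d); rewrite W andbT.
  - exact: A.
case/and4P => /validGP V /avoidGP A B C; apply/andP; split.
  apply/validGP => i j ij; rewrite ltnS leq_eqVlt => /orP [/eqP jd|jd]; last exact: V.
  subst j; apply/negP => /andP [Wi Wd].
  move: B; rewrite Wd orFb => /avoidGP B.
  by move: (B i ij); rewrite Wi.
apply/avoidGP => k; rewrite ltnS leq_eqVlt => /orP [/eqP ->|kd] //; exact: A.
Qed.

Definition V d m := #|[pred p : {dffun forall i : 'I_d, 'I_(n i)} | validG d (pv p) && avoidG d m (pv p)]|.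

Lemma V_sum d m : V d m = \sum_(q : {dffun forall i : 'I_d, 'I_(n i)}) (validG d (pv q) && avoidG d m (pv q) : nat).
Proof. by rewrite /V cardP_sum. Qed.

Lemma Wn_count k m : (forall c, c < r k -> 2 * l k <= g k c) -> \sum_(c < r k) g k c = n k ->
  m <= l k -> \sum_(x < n k) (Wn k m x : nat) = 2 * r k * m.
Proof. move=> H1 H2 H3; exact: (win_count H1 H2 H3). Qed.

Lemma peel d m : m <= l d -> (forall k, k < d -> l d <= l k) ->
  (forall c, c < r d -> 2 * l d <= g d c) -> \sum_(c < r d) g d c = n d ->
  V d.+1 m = V d m * (n d - 2 * r d * l d) + V d (l d) * (2 * r d * l d - 2 * r d * m).
Proof.
move=> ml lk H1 H2.
rewrite V_sum.
pose Pair (y : {dffun forall i : 'I_d, 'I_(n i)} * 'I_(n d)) : nat :=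
  [&& validG d (pv y.1), avoidG d m (pv y.1), ~~ Wn d (l d) y.2 || avoidG d (l d) (pv y.1) & ~~ Wn d m y.2].
rewrite (eq_bigr (fun p => Pair (phi p))); last first.
  move=> p _; rewrite peel_pred // /Pair /= pv_last.
  rewrite (validG_ext (v := pv p) (w := pv (restr p))); last by move=> k kd; rewrite pv_restr.
  rewrite (avoidG_ext m (v := pv p) (w := pv (restr p))); last by move=> k kd; rewrite pv_restr.
  by rewrite (avoidG_ext (l d) (v := pv p) (w := pv (restr p))) // => k kd; rewrite pv_restr.
transitivity (\sum_y Pair y); first by rewrite (reindex (@phi d) (onW_bij _ (phi_bij d))).
rewrite -(pair_big xpredT xpredT (fun q x => Pair (q, x))) /= exchange_big /=.
rewrite (eq_bigr (fun x : 'I_(n d) => (~~ Wn d (l d) x : nat) * V d m + (Wn d (l d) x && ~~ Wn d m x : nat) * V d (l d))); last first.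
  move=> x _; rewrite !V_sum /Pair /=.
  case: (boolP (Wn d m x)) => Wm.
    have Wl := Wn_mono ml Wm; rewrite Wl /= mul0n add0n mul0n.
    by apply: big1 => q _; rewrite !andbF.
  case: (boolP (Wn d (l d) x)) => Wl /=.
    rewrite mul0n add0n mul1n; apply: eq_bigr => q _; rewrite !andbT.
    case: (boolP (avoidG d (l d) (pv q))) => A; rewrite ?andbF ?andbT //.
    have -> : avoidG d m (pv q); last by rewrite andbT.
    apply/avoidGP => k kd.
    move/avoidGP: A => /(_ k kd); apply: contra; exact: Wn_mono.
  rewrite mul1n mul0n addn0; apply: eq_bigr => q _; by rewrite !andbT.
rewrite big_split /= -!big_distrl /=.
have S1 : \sum_(x < n d) (~~ Wn d (l d) x : nat) + \sum_(x < n d) (Wn d (l d) x : nat) = n d.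
  rewrite -big_split /= (eq_bigr (fun _ => 1)); first by rewrite sum_nat_const card_ord muln1.
  by move=> x _; case: (Wn d (l d) x).
have S2 : \sum_(x < n d) (Wn d (l d) x && ~~ Wn d m x : nat) + \sum_(x < n d) (Wn d m x : nat)
          = \sum_(x < n d) (Wn d (l d) x : nat).
  rewrite -big_split /=; apply: eq_bigr => x _.
  case: (boolP (Wn d m x)) => Wm; last by rewrite andbT addn0.
  by rewrite (Wn_mono ml Wm).
move: S1 S2; rewrite !Wn_count // => S1 S2.
have -> : \sum_(x < n d) (~~ Wn d (l d) x : nat) = n d - 2 * r d * l d by lia.
have -> : \sum_(x < n d) (Wn d (l d) x && ~~ Wn d m x : nat) = 2 * r d * l d - 2 * r d * m by lia.
by rewrite mulnC (mulnC (V d (l d))).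
Qed.
End Peel.


Local Open Scope ring_scope.

Fixpoint Gf (R : comNzRingType) (nR : nat -> R) (l r : nat -> nat) (d m : nat) : R :=
  match d with
  | 0 => 1
  | d'.+1 => Gf nR l r d' m * (nR d' - (2 * r d' * l d')%:R)
             + Gf nR l r d' (l d') * ((2 * r d' * l d')%:R - (2 * r d' * m)%:R)
  end.

Lemma Gf_ext (R : comNzRingType) (nR nR' : nat -> R) l r d m :
  (forall k, (k < d)%N -> nR k = nR' k) -> Gf nR l r d m = Gf nR' l r d m.
Proof.
elim: d m => [//|d IH] m H /=.
by rewrite !IH ?H // => k kd; apply: H; apply: ltnW.
Qed.

Lemma Gf_morph (R S : comNzRingType) (f : {rmorphism R -> S}) (nR : nat -> R) l r d m :
  f (Gf nR l r d m) = Gf (fun k => f (nR k)) l r d m.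
Proof.
elim: d m => [|d IH] m /=; first by rewrite rmorph1.
by rewrite rmorphD (rmorphM f (Gf nR l r d m)) (rmorphM f (Gf nR l r d (l d))) !rmorphB !rmorph_nat !IH.
Qed.

Section Alg.
Variables (nR : nat -> int) (l r : nat -> nat).
Notation G := (Gf nR l r).

Lemma alg1 d m : G d 0 - G d m =
  (2 * m)%:R * \sum_(i < d) ((r i)%:R * G i (l i) * \prod_(i.+1 <= k < d) (nR k - (2 * r k * l k)%:R)).
Proof.
elim: d m => [|d IH] m; first by rewrite big_ord0 /= subrr mulr0.
rewrite big_ord_recr /= big_geq // mulr1.
rewrite (eq_bigr (fun i : 'I_d => (r i)%:R * G i (l i) * \prod_(i.+1 <= k < d) (nR k - (2 * r k * l k)%:R)
   * (nR d - (2 * r d * l d)%:R))); last first.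
  by move=> i _; rewrite big_nat_recr /= ?mulrA //; apply: ltn_ord.
rewrite -big_distrl /=.
move: (IH m); set S := \sum_(i < d) _ => IHm.
have -> : G d 0 = G d m + (2 * m)%:R * S by rewrite -IHm; ring.
rewrite !natrM.
ring.
Qed.

Lemma alg2 d : G d 0 =
  \prod_(k < d) nR k
  - 4 * \sum_(i < d) \sum_(j < d | (i < j)%N)
      ((r i * r j * l j ^ 2)%:R * G i (l i)
       * \prod_(i.+1 <= k < j) (nR k - (2 * r k * l k)%:R)
       * \prod_(j.+1 <= k < d) nR k).
Proof.
elim: d => [|d IH]; first by rewrite /= !big_ord0 subr0.
rewrite big_ord_recr /=.
rewrite (eq_bigr (fun i : 'I_d.+1 => \sum_(j < d.+1) if (i < j)%N then
      ((r i * r j * l j ^ 2)%:R * G i (l i)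
       * \prod_(i.+1 <= k < j) (nR k - (2 * r k * l k)%:R)
       * \prod_(j.+1 <= k < d.+1) nR k) else 0)); last by move=> i _; rewrite big_mkcond.
rewrite big_ord_recr /= [X in _ - 4 * (_ + X)]big1 ?addr0; last first.
  by move=> j _; case: ifP => //; have := ltn_ord j; lia.
rewrite [X in _ - 4 * X](eq_bigr (fun i : 'I_d => (\sum_(j < d | (i < j)%N)
      ((r i * r j * l j ^ 2)%:R * G i (l i)
       * \prod_(i.+1 <= k < j) (nR k - (2 * r k * l k)%:R)
       * \prod_(j.+1 <= k < d) nR k)) * nR d
      + (r d * l d ^ 2)%:R * ((r i)%:R * G i (l i) * \prod_(i.+1 <= k < d) (nR k - (2 * r k * l k)%:R)))); last first.
  move=> i _; rewrite big_ord_recr /= ltn_ord (big_geq (m:=d.+1) (n:=d.+1)) // mulr1.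
  rewrite [in RHS]big_mkcond [in RHS]big_distrl /=; congr (_ + _).
    apply: eq_bigr => j _; case: ifP => _; last by rewrite mul0r.
    by rewrite big_nat_recr /= ?mulrA //; apply: ltn_ord.
  by rewrite !natrM; ring.
rewrite big_split /= -big_distrl -big_distrr /=.
move: (alg1 d (l d)); set S := \sum_(i < d) _ => A1.
move: IH; set T := \sum_(i < d) _ => IH.
have -> : G d (l d) = G d 0 - (2 * l d)%:R * S by rewrite -A1; ring.
rewrite IH !natrM ?natrX.
ring.
Qed.

End Alg.

Lemma Gf_red (n l r : nat -> nat) i d m : (d <= i)%N ->
  (forall k, (k < i)%N -> (l i <= l k)%N /\ (2 * r k * l k <= n k)%N) ->
  Gf (fun k => ((n k - 2 * r k * l i)%N%:R : int)) (fun k => (l k - l i)%N) r d m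
  = Gf (fun k => ((n k)%:R : int)) l r d (m + l i).
Proof.
elim: d m => [//|d IH] m di H /=.
have [h1 h2] := H d di.
rewrite !IH ?(ltnW di) //.
rewrite subnK //.
have e1 : (2 * r d * l i <= n d)%N.
  apply: leq_trans h2; rewrite leq_mul2l; apply/orP; right; exact: h1.
rewrite natrB // mulnBr natrB; last by rewrite leq_mul2l h1 orbT.
rewrite ?natrM ?natrD ?natrM; ring.
Qed.

Lemma Gf_poly (c : nat -> int) l r d m :
  Gf (fun k => 'X - (c k)%:P) l r d m \is monic /\ size (Gf (fun k => 'X - (c k)%:P) l r d m) = d.+1.
Proof.
elim: d m => [|d IH] m /=; first by rewrite monic1 size_poly1.
have [A1 A2] := IH m.
have [C1 C2] := IH (l d).
set A := Gf _ _ _ d m; set C := Gf _ _ _ d (l d).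
set K := (2 * r d * l d)%N.
have eB : 'X - (c d)%:P - K%:R = 'X - (c d + K%:R)%:P :> {poly int}.
  by rewrite polyCD polyC_natr opprD addrA.
rewrite eB.
have B1 : 'X - (c d + K%:R)%:P \is monic by apply: monicXsubC.
have sAB : size (A * ('X - (c d + K%:R)%:P)) = d.+2.
  by rewrite size_monicM ?size_XsubC ?A2 ?polyXsubC_eq0 ?addn2.
have sCE : (size ((C * (K%:R - (2 * r d * m)%N%:R))%R) < d.+2)%N.
  have := size_polyMleq C (K%:R - (2 * r d * m)%:R : {poly int}).
  rewrite C2 -!polyC_natr -polyCB size_polyC.
  case: (_ != 0) => /= h; apply: leq_ltn_trans h _; by rewrite ?addn1 ?addn0.
split.
  by rewrite monicE lead_coefDl ?sAB // -monicE monicMr.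
by rewrite size_polyDl ?sAB.
Qed.

Lemma Gf_horner (np : nat -> {poly int}) l r d m (x : int) :
  (Gf np l r d m).[x] = Gf (fun k => (np k).[x]) l r d m.
Proof. by rewrite -horner_evalE Gf_morph. Qed.

Lemma sum_gaps (n l r : nat -> nat) (g : nat -> nat -> nat) k :
  (forall c, (c < r k)%N -> (2 * l k <= g k c)%N) -> (\sum_(c < r k) g k c)%N = n k ->
  (2 * r k * l k <= n k)%N.
Proof.
move=> H1 <-.
have : (\sum_(c < r k) (2 * l k) <= \sum_(c < r k) g k c)%N.
  by apply: leq_sum => c _; apply: H1.
rewrite sum_nat_const card_ord; lia.
Qed.

Lemma conc (n l r : nat -> nat) (g : nat -> nat -> nat) d :
  (forall k j, (k <= j)%N -> (j < d)%N -> (l j <= l k)%N) ->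
  (forall k, (k < d)%N -> (forall c, (c < r k)%N -> (2 * l k <= g k c)%N) /\ (\sum_(c < r k) g k c)%N = n k) ->
  forall m, (forall k, (k < d)%N -> (m <= l k)%N) ->
  ((V n l r g d m)%:R : int) = Gf (fun k => (n k)%:R) l r d m.
Proof.
elim: d => [|d IH] Hl Hg m Hm.
  rewrite V_sum (eq_bigr (fun _ => 1%N)) ?sum_nat_const ?card_dffun ?big_ord0 //.
  move=> q _.
  have -> : validG n l r g 0 (pv q) by apply/validGP => i j ij; rewrite ltn0.
  by have -> : avoidG n l r g 0 m (pv q) by apply/avoidGP => k; rewrite ltn0.
have [G1 G2] := Hg d (ltnSn d).
have md := Hm d (ltnSn d).
have lk : forall k, (k < d)%N -> (l d <= l k)%N by move=> k kd; apply: Hl => //; apply: ltnW.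
rewrite peel //.
have Hl' : forall k j, (k <= j)%N -> (j < d)%N -> (l j <= l k)%N.
  by move=> k j kj jd; apply: Hl => //; apply: ltnW.
have Hg' : forall k, (k < d)%N -> (forall c, (c < r k)%N -> (2 * l k <= g k c)%N) /\ (\sum_(c < r k) g k c)%N = n k.
  by move=> k kd; apply: Hg; apply: ltnW.
have e1 := sum_gaps G1 G2.
have e2 : (2 * r d * m <= 2 * r d * l d)%N by rewrite leq_mul2l md orbT.
rewrite natrD !natrM !natrB // (IH Hl' Hg' m) ?(IH Hl' Hg' (l d)) //=.
by move=> k kd; apply: Hm; apply: ltnW.
Qed.

Lemma count_V (n l r : nat -> nat) (g : nat -> nat -> nat) d :
  (forall j, (j < d)%N -> (0 < l j)%N) -> count_valid d n l r g = V n l r g d 0.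
Proof.
move=> lpos; rewrite /count_valid /V; apply: eq_card => p; rewrite !inE.
have -> : avoidG n l r g d 0 (pv p) by apply/avoidGP => k kd; rewrite /Wn ltnn.
rewrite andbT /valid /validG.
apply: eq_forallb => i; apply: eq_forallb => j.
by rewrite /Wn !pvE !lpos.
Qed.

Lemma lstrict (d : nat) (l : nat -> nat) : (forall i, (i.+1 < d)%N -> (l i.+1 < l i)%N) ->
  forall k j, (k < j)%N -> (j < d)%N -> (l j < l k)%N.
Proof.
move=> H k; elim=> [//|j IH] kj jd.
have hj := H j jd.
case: (ltnP k j) => h; last by have -> : k = j by lia.
by apply: ltn_trans hj (IH h (ltnW jd)).
Qed.

Lemma cvE (n l r : nat -> nat) (g : nat -> nat -> nat) d :
  params_ok d n l r -> gaps_ok d n l r g ->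
  ((count_valid d n l r g)%:R : int) = Gf (fun k => (n k)%:R) l r d 0.
Proof.
move=> [Hl Hp] Hg.
have ls := lstrict Hl.
rewrite count_V; last by move=> j jd; have [] := Hp j jd.
apply: conc => //.
move=> k j; rewrite leq_eqVlt => /orP [/eqP -> //|kj] jd.
exact: ltnW (ls _ _ kj jd).
Qed.

Theorem proposition5p5 (d : nat) (n l r : nat -> nat) :
  (1 <= d)%N -> params_ok d n l r ->
  (* independence of the gap sequences *)
  (forall g g' : nat -> nat -> nat, gaps_ok d n l r g -> gaps_ok d n l r g' ->
     count_valid d n l r g = count_valid d n l r g') /\
  (* P_0 = 1 *)
  (forall (n0 l0 r0 : nat -> nat) (g0 : nat -> nat -> nat), count_valid 0 n0 l0 r0 g0 = 1%N) /\
  (* P_1(n_1, l_1, r_1) = n_1 *)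
  (forall (n0 l0 r0 : nat -> nat) (g0 : nat -> nat -> nat),
     params_ok 1 n0 l0 r0 -> gaps_ok 1 n0 l0 r0 g0 -> count_valid 1 n0 l0 r0 g0 = n0 0%N) /\
  (* the recursion; h i is any gap family for the reduced parameters of index i *)
  (forall (g : nat -> nat -> nat) (h : nat -> nat -> nat -> nat),
     gaps_ok d n l r g ->
     (forall i, (i < d)%N -> gaps_ok i (red_n n l r i) (red_l l i) r (h i)) ->
     (count_valid d n l r g)%:Z =
       \prod_(k < d) (n k)%:Z
       - 4 * \sum_(i < d) \sum_(j < d | (i < j)%N)
           ((r i * r j * l j ^ 2)%:Z
            * (count_valid i (red_n n l r i) (red_l l i) r (h i))%:Z
            * \prod_(i.+1 <= k < j) ((n k)%:Z - (2 * r k * l k)%:Z)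
            * \prod_(j.+1 <= k < d) (n k)%:Z)) /\
  (* the special case n_i = n - l_i - 2 sum_{j<>i} r_j min(l_i,l_j): monic polynomial of degree d *)
  (exists p : {poly int},
     p \is monic /\ size p = d.+1 /\ (d = 1%N -> p = 'X - (l 0%N)%:Z%:P) /\
     forall (m : int) (nv : nat -> nat) (g : nat -> nat -> nat),
       (forall i, (i < d)%N ->
          (nv i)%:Z = m - (l i)%:Z - 2 * \sum_(j < d | j != i :> nat) (r j * minn (l i) (l j))%:Z) ->
       params_ok d nv l r -> gaps_ok d nv l r g ->
       (count_valid d nv l r g)%:Z = p.[m]).
Proof.
move=> d1 Hpar.
have [Hl Hp] := Hpar.
have ls := lstrict Hl.
split.
  move=> g g' Hg Hg'; apply/eqP; rewrite -(eqr_nat int) (cvE Hpar Hg) (cvE Hpar Hg').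
  by [].
split.
  move=> n0 l0 r0 g0; apply/eqP; rewrite -(eqr_nat int) count_V // conc //.
split.
  move=> n0 l0 r0 g0 Hp0 Hg0; apply/eqP; rewrite -(eqr_nat int) (cvE Hp0 Hg0) /=.
  by rewrite !mul1r muln0 subr0 subrK.
split.
  move=> g h Hg Hh.
  rewrite -natz (cvE Hpar Hg) alg2.
  congr (_ - _ * _).
    by apply: eq_bigr => k _; rewrite natz.
  apply: eq_bigr => i _; apply: eq_bigr => j ij.
  have id := ltn_ord i.
  have -> : ((count_valid i (red_n n l r i) (red_l l i) r (h i))%:Z) = Gf (fun k => (n k)%:R) l r i (l i).
    rewrite -natz count_V; last first.
      by move=> j' j'i; rewrite /red_l subn_gt0; apply: ls.
    rewrite conc //; last 2 first.
    - move=> k k'; rewrite /red_l => kk' k'i; apply: leq_sub2r.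
      move: kk'; rewrite leq_eqVlt => /orP [/eqP -> //|kk'].
      exact: ltnW (ls _ _ kk' (ltn_trans k'i id)).
    - exact: Hh.
    rewrite -[l i]add0n -Gf_red //.
    move=> k ki; have [_ _ h3] := Hp k (ltn_trans ki id); split => //.
    exact: ltnW (ls _ _ ki id).
  rewrite natz; congr (_ * _ * _); apply: eq_bigr => k _; by rewrite !natz.
pose c k : int := (l k)%:Z + 2 * \sum_(j < d | j != k :> nat) (r j * minn (l k) (l j))%:Z.
exists (Gf (fun k => 'X - (c k)%:P) l r d 0).
have [M S] := Gf_poly c l r d 0.
split => //; split => //; split.
  move=> d1'; subst d; rewrite /= !mul1r muln0 subr0 subrK /c.
  rewrite big1 ?mulr0 ?addr0 // => j; by rewrite (ord1 j).
move=> m nv g Hnv Hp' Hg'.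
rewrite -natz (cvE Hp' Hg') Gf_horner; apply: Gf_ext => k kd.
by rewrite hornerXsubC natz Hnv // /c opprD addrA.
Qed.
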